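(* Let $a,b\ge1$, $\nu$ a permutation of $[a]$, and $x\in[a]\times[b]$. Let $A(i,j)=(a+1-i,\,b+1-j)$, and for $I\in J(\mathcal{Q}_{a,b})$ let $\mathbf{1}_I$ be the indicator function of $I$. Then $h(I)=\mathbf{1}_I(x)-\big(1-\mathbf{1}_I(A(x))\big)$ is $0$-mesic for $\mathcal{T}_\nu$ acting on $J(\mathcal{Q}_{a,b})$; that is, along every orbit the number of ideals containing $x$ equals the number of ideals not containing $A(x)$.
   Context: $J(P)$ is the set of order ideals of a finite poset $P$. Toggle: $\sigma_x(I)=I\cup\{x\}$ if $x\notin I$ and $I\cup\{x\}\in J(P)$; $I\setminus\{x\}$ if $x\in I$ and $I\setminus\{x\}\in J(P)$; $I$ otherwise. For a chain $C=\{x_1<\dots<x_m\}$, $\sigma_C=\sigma_{x_1}\circ\cdots\circ\sigma_{x_m}$. $\mathcal{Q}_{a,b}=[a]\times[b]$ with componentwise order; columns $C_c=\{(c,j): j\in[b]\}$; comotion $\mathcal{T}_\nu=\sigma_{C_{\nu(a)}}\circ\cdots\circ\sigma_{C_{\nu(1)}}$. A function is $0$-mesic for a permutation $\tau$ of a finite set if its average over every $\tau$-orbit is $0$. *)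

(* Defs.v *)
From HB Require Import structures.
From mathcomp Require Import all_boot all_order all_algebra all_fingroup.
Set Implicit Arguments. Unset Strict Implicit. Unset Printing Implicit Defensive.

(* Elements of Q_{a,b} = [a] x [b], 0-indexed: (i,j) : 'I_a * 'I_b
   stands for (i+1, j+1). Componentwise order. *)
Definition Qle (a b : nat) (x y : 'I_a * 'I_b) : bool :=
  (x.1 <= y.1)%N && (x.2 <= y.2)%N.

Definition is_ideal (a b : nat) (I : {set 'I_a * 'I_b}) : bool :=
  [forall y, forall z, ((y \in I) && Qle z y) ==> (z \in I)].

Definition toggle (a b : nat) (x : 'I_a * 'I_b) (I : {set 'I_a * 'I_b})
  : {set 'I_a * 'I_b} :=
  if x \notin I then (if is_ideal (x |: I) then x |: I else I)
  else (if is_ideal (I :\ x) then I :\ x else I).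

(* column toggle sigma_{C_c} = sigma_{(c,1)} o ... o sigma_{(c,b)} *)
Definition colToggle (a b : nat) (c : 'I_a) (I : {set 'I_a * 'I_b})
  : {set 'I_a * 'I_b} :=
  foldr (fun j J => toggle (c, j) J) I (enum 'I_b).

(* comotion T_nu = sigma_{C_{nu(a)}} o ... o sigma_{C_{nu(1)}} *)
Definition comotion (a b : nat) (nu : {perm 'I_a}) (I : {set 'I_a * 'I_b})
  : {set 'I_a * 'I_b} :=
  foldl (fun J i => colToggle (nu i) J) I (enum 'I_a).

Definition antipode (a b : nat) (x : 'I_a * 'I_b) : 'I_a * 'I_b :=
  (rev_ord x.1, rev_ord x.2).

Definition hstat (a b : nat) (x : 'I_a * 'I_b) (I : {set 'I_a * 'I_b}) : int :=
  ((x \in I)%:Z - (1 - (antipode x \in I)%:Z))%R.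

(* f is 0-mesic for the map tau on the orbits starting from ideals:
   the sum (equivalently, the average) of f over each tau-orbit is 0. *)
Definition zero_mesic_on_ideals (a b : nat)
  (tau : {set 'I_a * 'I_b} -> {set 'I_a * 'I_b})
  (f : {set 'I_a * 'I_b} -> int) : Prop :=
  forall I : {set 'I_a * 'I_b}, is_ideal I ->
    (\sum_(J : {set 'I_a * 'I_b} | fconnect tau I J) f J)%R = 0%R.

(* Main.v *)
Require Import Defs.
From HB Require Import structures.
From mathcomp Require Import all_boot all_order all_algebra all_fingroup.
From mathcomp Require Import zify.
Set Implicit Arguments. Unset Strict Implicit. Unset Printing Implicit Defensive.

Definition Rc (W : nat -> bool) k m := \sum_(k <= i < k + m) (W i : nat).
Definition pp (b : nat) (W : nat -> bool) c m :=
  \sum_(0 <= i < b) ((Rc W m (c.+1 + i) <= c) : nat).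

Lemma RcD W k m1 m2 : Rc W k (m1 + m2) = Rc W k m1 + Rc W (k + m1) m2.
Proof.
rewrite /Rc addnA (@big_cat_nat _ _ _ (k + m1)) //=; lia.
Qed.

Lemma Rc1 W k : Rc W k 1 = W k.
Proof. by rewrite /Rc addn1 big_nat1. Qed.

Lemma Rc0 W k : Rc W k 0 = 0.
Proof. by rewrite /Rc addn0 big_geq. Qed.

Lemma RcS W k m : Rc W k m.+1 = W k + Rc W k.+1 m.
Proof. by rewrite -add1n RcD Rc1 addn1. Qed.

Lemma RcSr W k m : Rc W k m.+1 = Rc W k m + W (k + m).
Proof. by rewrite -addn1 RcD Rc1. Qed.

Lemma Rc_le W k m : Rc W k m <= m.
Proof.
elim: m => [|m IH]; first by rewrite Rc0.
rewrite RcSr; case: (W _) => /=; lia.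
Qed.

Lemma Rc_mono W k m1 m2 : m1 <= m2 -> Rc W k m1 <= Rc W k m2.
Proof. move=> h; rewrite -(subnKC h) RcD; lia. Qed.

Lemma Rc_per n W k m : (forall i, W (i + n) = W i) -> Rc W (k + n) m = Rc W k m.
Proof.
move=> hp; elim: m => [|m IH]; first by rewrite !Rc0.
by rewrite !RcSr IH addnAC hp.
Qed.

Lemma Rc_perk n W k m q : (forall i, W (i + n) = W i) -> Rc W (k + q * n) m = Rc W k m.
Proof.
move=> hp; elim: q => [|q IH]; first by rewrite mul0n addn0.
by rewrite mulSn (addnC n) addnA Rc_per // IH.
Qed.

Lemma Rc_full n W k : (forall i, W (i + n) = W i) -> Rc W k n = Rc W 0 n.
Proof.
move=> hp; elim: k => [//|k IH].
have h1 := RcS W k n; have h2 := RcSr W k n.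
rewrite hp IH in h2; lia.
Qed.

Lemma Pdown (P : nat -> bool) K i : (forall i, P i.+1 -> P i) -> P K -> i <= K -> P i.
Proof.
move=> hP; elim: K => [|K IH] hK hi; first by move: hi; rewrite leqn0 => /eqP->.
case: (ltngtP i K.+1) hi => // [hi _|-> _ //]; apply: IH => //; exact: hP.
Qed.

Lemma sum_prefix (P : nat -> bool) b K : (forall i, P i.+1 -> P i) -> K < b ->
  (\sum_(0 <= i < b) (P i : nat) <= K) = ~~ P K.
Proof.
move=> hP hK; case hPK: (P K) => /=.
- apply/negbTE; rewrite -ltnNge.
  rewrite (@big_cat_nat _ _ _ K.+1) //=.
  apply: (@leq_trans (\sum_(0 <= i < K.+1) (P i : nat))); last exact: leq_addr.
  rewrite (@eq_big_nat _ _ _ 0 K.+1 _ (fun _ => 1)); last first.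
    by move=> i /andP [_ hi]; rewrite (Pdown hP hPK).
  by rewrite sum_nat_const_nat muln1 subn0.
- rewrite (@big_cat_nat _ _ _ K) //=; last exact: ltnW.
  rewrite (@eq_big_nat _ _ _ K b _ (fun _ => 0)); last first.
    move=> i /andP [hi _]; case hPi: (P i) => //.
    suff : P K by rewrite hPK.
    exact: (Pdown hP hPi).
  rewrite sum_nat_const_nat muln0 addn0.
  apply: (@leq_trans (\sum_(0 <= i < K) 1)); first by apply: leq_sum => i _; case: (P i).
  by rewrite sum_nat_const_nat muln1 subn0.
Qed.

Lemma pp_down W c m i : (Rc W m (c.+1 + i.+1) <= c) -> (Rc W m (c.+1 + i) <= c).
Proof. move=> h; apply: leq_trans h; apply: Rc_mono; lia. Qed.

Lemma pp_le b W c K m : K < b ->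
  (pp b W c m <= K) = (c < Rc W m (c.+1 + K)).
Proof.
move=> hK; rewrite /pp (@sum_prefix (fun i => Rc W m (c.+1 + i) <= c)) //.
- by rewrite ltnNge.
- move=> i; exact: pp_down.
Qed.

Lemma pp_leb b W c m : pp b W c m <= b.
Proof.
apply: (@leq_trans (\sum_(0 <= i < b) 1)).
apply: leq_sum => i _; exact: leq_b1.
by rewrite sum_nat_const_nat muln1 subn0.
Qed.

Lemma pp_mono b W c m : pp b W c m <= pp b W c.+1 m.
Proof.
apply: leq_sum => i _.
have h : Rc W m (c.+2 + i) <= Rc W m (c.+1 + i) + 1.
  by rewrite -addSnnS addSn RcSr; case: (W _) => /=; lia.
case: (leqP (Rc W m (c.+1 + i)) c) => /=; case: leqP => /=; lia.
Qed.

Lemma pp0 b W m : 0 < b -> (pp b W 0 m == 0) = W m.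
Proof.
move=> hb; rewrite -leqn0 pp_le // addn0 Rc1; by case: (W m).
Qed.

Lemma pp_per a b W c m : (forall i, W (i + (a + b)) = W i) ->
  pp b W c (m + (a + b)) = pp b W c m.
Proof. by move=> hp; apply: eq_bigr => i _; rewrite Rc_per. Qed.

Lemma pp_D a b W c m : (forall i, W (i + (a + b)) = W i) -> Rc W 0 (a + b) = a ->
  0 < b -> c < a -> W m = false ->
  0 < pp b W c m /\ pp b W c m.+1 = (pp b W c m).-1.
Proof.
move=> hp ht hb hc hW.
have eR : forall t, Rc W m t.+1 = Rc W m.+1 t by move=> t; rewrite RcS hW.
case: b hb hp ht => [//|b'] _ hp ht.
have last0 : (Rc W m.+1 (c.+1 + b') <= c) = false.
  have h1 : Rc W m.+1 (a + b'.+1) = a by rewrite Rc_full.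
  have e1 := RcD W m.+1 (c.+1 + b' + (a - c.+1)) 1.
  have e2 := RcD W m.+1 (c.+1 + b') (a - c.+1).
  have e3 : c.+1 + b' + (a - c.+1) + 1 = a + b'.+1 by lia.
  have e4 : m.+1 + (c.+1 + b' + (a - c.+1)) = m + (a + b'.+1) by lia.
  rewrite e3 h1 Rc1 e4 hp hW e2 /= addn0 in e1.
  have := Rc_le W (m.+1 + (c.+1 + b')) (a - c.+1).
  case: leqP => //; lia.
have -> : pp b'.+1 W c m.+1 = pp b' W c m.+1.
  by rewrite /pp big_nat_recr //= last0 addn0.
have -> : pp b'.+1 W c m = 1 + pp b' W c m.+1.
  rewrite /pp big_nat_recl // addn0 eR Rc_le /=; congr (_ + _).
  by apply: eq_big_nat => i _; rewrite addnS eR.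
by split; lia.
Qed.

Lemma pp_R b W c m : W m = true -> pp b W c m.+1 = pp b W c.+1 m.
Proof.
move=> hW; apply: eq_bigr => i _.
by rewrite (addSn c.+1) (RcS W m) hW add1n ltnS.
Qed.

Lemma pp_Rlast a b W m : (forall i, W (i + (a + b)) = W i) -> Rc W 0 (a + b) = a ->
  0 < a -> W m = true -> pp b W a.-1 m.+1 = b.
Proof.
move=> hp ht ha hW.
rewrite /pp (@eq_big_nat _ _ _ 0 b _ (fun _ => 1)); last first.
  move=> i /andP [_ hi].
  have h1 : Rc W m.+1 (a + b) = a by rewrite Rc_full.
  have e1 := RcD W m.+1 (a + b).-1 1.
  have e3 : (a + b).-1 + 1 = a + b by lia.
  have e4 : m.+1 + (a + b).-1 = m + (a + b) by lia.
  rewrite e3 h1 Rc1 e4 hp hW in e1.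
  have hle : Rc W m.+1 (a.-1.+1 + i) <= Rc W m.+1 (a + b).-1 by apply: Rc_mono; lia.
  suff -> : (Rc W m.+1 (a.-1.+1 + i) <= a.-1) by [].
  lia.
by rewrite sum_nat_const_nat muln1 subn0.
Qed.

Lemma pp_adj a b W c m : (forall i, W (i + (a + b)) = W i) -> Rc W 0 (a + b) = a ->
  0 < b -> c.+1 < a -> pp b W c m.+1 <= pp b W c.+1 m.
Proof.
move=> hp ht hb hc; case hW: (W m); first by rewrite (pp_R b c hW).
have [h1 h2] := pp_D hp ht hb (ltnW hc) hW.
rewrite h2; apply: leq_trans (pp_mono b W c m); exact: leq_pred.
Qed.

Definition G (a b : nat) (k : nat -> nat) : {set 'I_a * 'I_b} :=
  [set y : 'I_a * 'I_b | (y.2 : nat) < k y.1].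
Definition upd (k : nat -> nat) (c v : nat) := fun i => if i == c then v else k i.
Definition hiN (b : nat) (k : nat -> nat) c := if c == 0 then b else k c.-1.
Definition loN (a : nat) (k : nat -> nat) c := if c.+1 == a then 0 else k c.+1.
Definition mono (a : nat) (k : nat -> nat) := forall i, i.+1 < a -> k i.+1 <= k i.

Lemma mono_le a k i j : mono a k -> i <= j -> j < a -> k j <= k i.
Proof.
move=> hm hij; elim: j hij => [|j IH] hij hj; first by move: hij; rewrite leqn0 => /eqP->.
case: (ltngtP i j.+1) hij => // [hi _|-> _ //].
apply: leq_trans (hm _ hj) (IH hi (ltnW hj)).
Qed.

Lemma G_ideal a b k : mono a k -> is_ideal (G a b k).
Proof.
move=> hm; apply/forallP => y; apply/forallP => z; apply/implyP => /andP [].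
rewrite !inE /Qle => hy /andP [h1 h2].
move: (@mono_le a k z.1 y.1 hm h1 (ltn_ord _)) => hk; exact: leq_ltn_trans h2 (leq_trans hy hk).
Qed.

Lemma G_eq a b k k' : (forall i, i < a -> k i = k' i) -> G a b k = G a b k'.
Proof. by move=> h; apply/setP => y; rewrite !inE h. Qed.

Lemma not_ideal a b (S : {set 'I_a * 'I_b}) y z :
  y \in S -> Qle z y -> z \notin S -> ~~ is_ideal S.
Proof.
move=> hy hq hz; apply/negP => /forallP /(_ y) /forallP /(_ z) /implyP.
by rewrite hy hq => /(_ isT); apply/negP.
Qed.

Lemma mono_upd a b k c v : mono a k -> c < a -> loN a k c <= v -> v <= hiN b k c ->
  mono a (upd k c v).
Proof.
rewrite /loN /hiN /upd => hm hc hl hh i hi.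
case: (eqVneq i.+1 c) => [e|ne].
- subst c; rewrite (_ : (i == i.+1) = false); last by apply/eqP; lia.
  by move: hh.
- case: (eqVneq i c) => [e|ne2]; last exact: hm.
  subst c; move: hl; case: eqP => //; lia.
Qed.

Definition tog1 a b (k : nat -> nat) (c t : nat) :=
  if (t == k c) && (k c < hiN b k c) then (k c).+1
  else if (t.+1 == k c) && (loN a k c < k c) then (k c).-1 else k c.

Lemma G_same a b k (c : nat) : G a b (upd k c (k c)) = G a b k.
Proof. by apply: G_eq => i _; rewrite /upd; case: eqP => // ->. Qed.

Lemma G_add a b (k : nat -> nat) (c : 'I_a) (t : 'I_b) : (t : nat) = k c ->
  (c, t) |: G a b k = G a b (upd k c (k c).+1).
Proof.
move=> e; apply/setP => [[i j]]; rewrite !inE /upd /= xpair_eqE -!val_eqE /=.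
case: (eqVneq (i : nat) c) => [ei|ne] /=; last by [].
rewrite ei -e; lia.
Qed.

Lemma G_del a b (k : nat -> nat) (c : 'I_a) (t : 'I_b) : (t : nat).+1 = k c ->
  G a b k :\ (c, t) = G a b (upd k c (k c).-1).
Proof.
move=> e; apply/setP => [[i j]]; rewrite !inE /upd /= xpair_eqE -!val_eqE /=.
case: (eqVneq (i : nat) c) => [ei|ne] /=; last by [].
rewrite ei -e /=; case: (ltngtP j t) => //=; lia.
Qed.

Lemma toggle_G a b (k : nat -> nat) (c : 'I_a) (t : 'I_b) :
  mono a k -> (forall i, i < a -> k i <= b) ->
  toggle (c, t) (G a b k) = G a b (upd k c (tog1 a b k c t)).
Proof.
move=> hm hb.
have hlo : loN a k c <= k c.
  rewrite /loN; case: eqP => // ne; apply: hm; have := ltn_ord c; lia.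
have hhi : k c <= hiN b k c.
  rewrite /hiN; case: eqP => [_|ne]; first exact: hb.
  have := hm c.-1; have := ltn_ord c; rewrite prednK; [lia | lia].
have hin : ((c, t) \in G a b k) = (t < k c) by rewrite inE.
rewrite /toggle hin /tog1.
case: (ltnP t (k c)) => htk /=.
-
  rewrite (_ : ((t:nat) == k c) = false) /=; last by apply/eqP; lia.
  case: (boolP ((t.+1 == k c) && (loN a k c < k c))) => [/andP [/eqP e hl]|hno].
  + rewrite (G_del e) G_ideal //; apply: (@mono_upd a b) => //; lia.
  + rewrite G_same.
    suff -> : is_ideal (G a b k :\ (c, t)) = false by [].
    apply/negbTE.
    case: (ltngtP t.+1 (k c)) => [hlt|hgt|he]; [|lia|]; last first.
      move: hno; rewrite he eqxx /= -leqNgt => hl.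
      have hca : c.+1 < a.
        move: hl; rewrite /loN; case: eqP => [_|ne]; [lia|]. have := ltn_ord c; lia.
      have hk1 : k c <= k c.+1 by move: hl; rewrite /loN; case: eqP => //; lia.
      apply: (@not_ideal _ _ _ (Ordinal hca, t) (c, t)).
      * rewrite !inE /= xpair_eqE -!val_eqE /=; lia.
      * rewrite /Qle /=; lia.
      * by rewrite !inE eqxx.
    have ht1 : t.+1 < b by have := hb c (ltn_ord c); lia.
    apply: (@not_ideal _ _ _ (c, Ordinal ht1) (c, t)).
    * rewrite !inE /= xpair_eqE -!val_eqE /=; lia.
    * rewrite /Qle /=; lia.
    * by rewrite !inE eqxx.
-
  case: (boolP (((t:nat) == k c) && (k c < hiN b k c))) => [/andP [/eqP e hl]|hno].
  + rewrite (G_add e) G_ideal //; apply: (@mono_upd a b) => //; lia.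
  + rewrite (_ : (t.+1 == k c) = false) /=; last by apply/eqP; lia.
    rewrite G_same.
    suff -> : is_ideal ((c, t) |: G a b k) = false by [].
    apply/negbTE.
    case: (ltngtP (k c) t) => [hlt|hgt|he]; [|lia|].
    * have ht1 : t.-1 < b by have := ltn_ord t; lia.
      apply: (@not_ideal _ _ _ (c, t) (c, Ordinal ht1)).
      -- by rewrite !inE eqxx.
      -- rewrite /Qle /=; lia.
      -- rewrite !inE /= xpair_eqE -!val_eqE /=; lia.
    * move: hno; rewrite he eqxx /= -leqNgt => hl.
      have hc0 : c.-1 < a by have := ltn_ord c; lia.
      have hc1 : (c : nat) != 0.
        apply/eqP => e0; move: hl; rewrite /hiN e0 /=; have := ltn_ord t; lia.
      have hk1 : k c.-1 <= k c by move: hl; rewrite /hiN (negbTE hc1) he.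
      apply: (@not_ideal _ _ _ (c, t) (Ordinal hc0, t)).
      -- by rewrite !inE eqxx.
      -- rewrite /Qle /=; lia.
      -- rewrite !inE /= xpair_eqE -!val_eqE /=; lia.
Qed.

Lemma upd_upd a b k c v w : G a b (upd (upd k c v) c w) = G a b (upd k c w).
Proof. by apply: G_eq => i _; rewrite /upd; case: eqP. Qed.

Lemma hiN_upd b k c v : hiN b (upd k c v) c = hiN b k c.
Proof. rewrite /hiN /upd; case: eqP => // ne; case: eqP => //; lia. Qed.

Lemma loN_upd a k c v : loN a (upd k c v) c = loN a k c.
Proof. rewrite /loN /upd; case: eqP => // ne; case: eqP => //; lia. Qed.

Definition gfun a b k c t :=
  if k c < hiN b k c then (if t <= k c then (k c).+1 else k c)
  else minn (k c) (maxn t (loN a k c)).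

Lemma col_aux a b (k : nat -> nat) (c : 'I_a) (s : seq 'I_b) t :
  mono a k -> (forall i, i < a -> k i <= b) -> map val s = iota t (b - t) ->
  foldr (fun j J => toggle (c, j) J) (G a b k) s = G a b (upd k c (gfun a b k c t)).
Proof.
move=> hm hb.
have hlo : loN a k c <= k c.
  rewrite /loN; case: eqP => // ne; apply: hm; have := ltn_ord c; lia.
have hhi : k c <= hiN b k c.
  rewrite /hiN; case: eqP => [_|ne]; first exact: hb.
  have := hm c.-1; have := ltn_ord c; rewrite prednK; [lia | lia].
have hhib : hiN b k c <= b.
  rewrite /hiN; case: eqP => // ne; apply: hb; have := ltn_ord c; lia.
have hkb := hb c (ltn_ord c).
elim: s t => [|j s IH] t /=.
- move=> /esym /(congr1 size); rewrite size_iota /= => e.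
  rewrite -{1}(G_same a b k c); congr (G a b (upd k c _)).
  rewrite /gfun; case: ifP => h1; first by case: ifP => //; lia.
  lia.
- move=> H.
  have [ht e] : t < b /\ b - t = (b - t.+1).+1.
    by move: H; case e: (b - t) => [|m] //=; split; lia.
  move: H; rewrite e /= => -[ej es].
  rewrite (IH t.+1 es).
  set v := gfun a b k c t.+1.
  have hv1 : loN a k c <= v.
    rewrite /v /gfun; case: ifP => h1; first by case: ifP; lia.
    lia.
  have hv2 : v <= hiN b k c.
    rewrite /v /gfun; case: ifP => h1; first by case: ifP; lia.
    lia.
  rewrite toggle_G; first last.
  - move=> i hi; rewrite /upd; case: eqP => _; [lia | exact: hb].
  - exact: (@mono_upd a b).
  rewrite upd_upd; congr (G a b (upd k c _)).
  have kv : upd k c v c = v by rewrite /upd eqxx.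
  rewrite /tog1 hiN_upd loN_upd kv ej.
  move: hv1 hv2; rewrite /v /gfun.
  by do ![case: ifP => ?]; lia.
Qed.

Lemma colToggle_G a b (k : nat -> nat) (c : 'I_a) :
  mono a k -> (forall i, i < a -> k i <= b) ->
  colToggle c (G a b k) =
  G a b (upd k c (if k c < hiN b k c then (k c).+1 else loN a k c)).
Proof.
move=> hm hb.
have hlo : loN a k c <= k c.
  rewrite /loN; case: eqP => // ne; apply: hm; have := ltn_ord c; lia.
rewrite /colToggle (@col_aux a b k c (enum 'I_b) 0) //; last by rewrite val_enum_ord subn0.
congr (G a b (upd k c _)); rewrite /gfun; case: ifP => //; lia.
Qed.

Lemma step_word a b W c m : (forall i, W (i + (a + b)) = W i) -> Rc W 0 (a + b) = a ->
  0 < b -> c < a ->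
  (if b - pp b W c m < (if c == 0 then b else b - pp b W c.-1 m.+1)
   then (b - pp b W c m).+1
   else (if c.+1 == a then 0 else b - pp b W c.+1 m)) = b - pp b W c m.+1.
Proof.
move=> hp ht hb hc.
have hpb := pp_leb b W c m.
case hW: (W m).
- have e1 : pp b W c m.+1 = if c.+1 == a then b else pp b W c.+1 m.
    case: eqP => [ea|ne]; last by rewrite pp_R.
    by rewrite (_ : c = a.-1) ?(pp_Rlast hp ht) //; lia.
  have e0 : b - pp b W c m < (if c == 0 then b else b - pp b W c.-1 m.+1) = false.
    case: eqP => [ec|ne].
      by rewrite ec; move: (@pp0 b W m hb); rewrite hW => /eqP ->; rewrite subn0 ltnn.
    have := pp_R b c.-1 hW; rewrite (_ : c.-1.+1 = c); last by lia.
    by move=> ->; rewrite ltnn.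
  rewrite e0 e1; case: eqP => _ //; by rewrite subnn.
- have [h1 h2] := pp_D hp ht hb hc hW.
  rewrite h2.
  have -> : b - pp b W c m < (if c == 0 then b else b - pp b W c.-1 m.+1).
    case: eqP => [ec|ne]; first lia.
    have [h3 h4] := pp_D hp ht hb (leq_ltn_trans (leq_pred c) hc) hW.
    have h5 := pp_mono b W c.-1 m; rewrite (_ : c.-1.+1 = c) in h5; last by lia.
    rewrite h4; lia.
  lia.
Qed.

Definition pos a (o0 : 'I_a) (nu : {perm 'I_a}) (c : nat) : nat :=
  val ((nu^-1)%g (insubd o0 c)).
Definition relE a (o0 : 'I_a) nu (E : nat -> nat) :=
  forall d, d.+1 < a -> E d = E d.+1 + (pos o0 nu d.+1 < pos o0 nu d).
Definition kof b W (E : nat -> nat) := fun c => b - pp b W c (E c).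

Lemma pos_inj a (o0 : 'I_a) nu c c' : c < a -> c' < a -> pos o0 nu c = pos o0 nu c' -> c = c'.
Proof.
move=> hc hc' /val_inj /perm_inj e.
by have := congr1 val e; rewrite !val_insubd hc hc'.
Qed.

Lemma pos_nu a (o0 : 'I_a) nu (o : 'I_a) : pos o0 nu (nu o) = o.
Proof. by rewrite /pos valKd permK. Qed.

Lemma mono_kof a b W F : (forall i, W (i + (a + b)) = W i) -> Rc W 0 (a + b) = a -> 0 < b ->
  (forall c, c.+1 < a -> F c = F c.+1 \/ F c = (F c.+1).+1) -> mono a (kof b W F).
Proof.
move=> hp ht hb hF c hc; rewrite /kof.
suff : pp b W c (F c) <= pp b W c.+1 (F c.+1) by lia.
case: (hF c hc) => ->; first exact: pp_mono.
exact: pp_adj.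
Qed.

Lemma stage a b W (o0 : 'I_a) (nu : {perm 'I_a}) E i :
  (forall i, W (i + (a + b)) = W i) -> Rc W 0 (a + b) = a -> 0 < b ->
  relE o0 nu E -> i <= a ->
  foldl (fun J j => colToggle (nu j) J) (G a b (kof b W E)) (take i (enum 'I_a)) =
  G a b (kof b W (fun c => E c + (pos o0 nu c < i))).
Proof.
move=> hp ht hb hE.
elim: i => [|i IH] hi.
  by rewrite take0 /=; apply: G_eq => c _; rewrite /kof addn0.
have hsz : i < size (enum 'I_a) by rewrite size_enum_ord.
rewrite (take_nth o0 hsz) foldl_rcons IH; last by lia.
set o := nth o0 (enum 'I_a) i.
have ho : (o : nat) = i by rewrite /o nth_enum_ord.
set Ei := fun c => E c + (pos o0 nu c < i).
have hpi : pos o0 nu (nu o) = i by rewrite pos_nu.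
have hmono : mono a (kof b W Ei).
  apply: (mono_kof hp ht hb) => c hc; rewrite /Ei (hE c hc).
  have := @pos_inj a o0 nu c c.+1 (ltnW hc) hc.
  case: (ltngtP (pos o0 nu c.+1) (pos o0 nu c)) => [h1|h1|h1] h2 /=.
  - case: (ltnP (pos o0 nu c) i) => h3; case: (ltnP (pos o0 nu c.+1) i) => h4 /=; lia.
  - case: (ltnP (pos o0 nu c) i) => h3; case: (ltnP (pos o0 nu c.+1) i) => h4 /=; lia.
  - by have := h2 (esym h1); lia.
rewrite colToggle_G //; last by move=> c _; rewrite /kof leq_subr.
apply: G_eq => c hc.
rewrite /upd; case: eqP => [ec|ne].
-
  have hcc : (nu o : nat) < a by [].
  rewrite /kof /hiN /loN ec /Ei hpi ltnn addn0 ltnSn addn1.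
  rewrite -(@step_word a b W (nu o) (E (nu o)) hp ht hb hcc).
  have eL : (nu o : nat) != 0 -> E (nu o).-1 + (pos o0 nu (nu o).-1 < i) = (E (nu o)).+1.
    move=> hn0.
    have hd : (nu o).-1.+1 < a by lia.
    have := hE _ hd; rewrite (_ : (nu o).-1.+1 = nu o); last by lia.
    rewrite hpi => ->.
    have := @pos_inj a o0 nu (nu o).-1 (nu o) (leq_ltn_trans (leq_pred _) hcc) hcc.
    rewrite hpi => hne.
    case: (ltngtP i (pos o0 nu (nu o).-1)) => h1 /=; try lia.
  have eR : (nu o).+1 < a -> E (nu o).+1 + (pos o0 nu (nu o).+1 < i) = E (nu o).
    move=> hd; rewrite (hE _ hd) hpi.
    have := @pos_inj a o0 nu (nu o).+1 (nu o) hd hcc.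
    rewrite hpi => hne.
    case: (ltngtP (pos o0 nu (nu o).+1) i) => h1 /=; lia.
  case: eqP => [e0|n0]; last rewrite eL; try (by apply/eqP);
  case: eqP => [e1|n1] //; rewrite eR //; have := ltn_ord (nu o); lia.
- rewrite /kof /Ei; congr (b - pp b W c (E c + _)).
  have := @pos_inj a o0 nu c (nu o) hc (ltn_ord _); rewrite hpi => hne.
  case: (ltngtP (pos o0 nu c) i) => h1; try lia.
Qed.

Lemma comotion_G a b W (o0 : 'I_a) (nu : {perm 'I_a}) E :
  (forall i, W (i + (a + b)) = W i) -> Rc W 0 (a + b) = a -> 0 < b ->
  relE o0 nu E ->
  comotion nu (G a b (kof b W E)) = G a b (kof b W (fun c => (E c).+1)).
Proof.
move=> hp ht hb hE.
rewrite /comotion -(take_size (enum 'I_a)) size_enum_ord (stage hp ht hb hE) //.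
apply: G_eq => c hc; rewrite /kof.
have : pos o0 nu c < a by rewrite /pos ltn_ord.
by move=> ->; rewrite addn1.
Qed.

Lemma relE_shift a (o0 : 'I_a) nu E t : relE o0 nu E -> relE o0 nu (fun c => E c + t).
Proof. move=> h d hd; rewrite h //; lia. Qed.

Lemma iter_comotion a b W (o0 : 'I_a) (nu : {perm 'I_a}) E t :
  (forall i, W (i + (a + b)) = W i) -> Rc W 0 (a + b) = a -> 0 < b ->
  relE o0 nu E ->
  iter t (comotion nu) (G a b (kof b W E)) = G a b (kof b W (fun c => E c + t)).
Proof.
move=> hp ht hb hE; elim: t => [|t IH] /=.
  by apply: G_eq => c _; rewrite /kof addn0.
rewrite IH (comotion_G hp ht hb (relE_shift t hE)).
by apply: G_eq => c _; rewrite /kof addnS.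
Qed.

Definition E0 a (o0 : 'I_a) nu (c : nat) :=
  a - \sum_(0 <= d < c) ((pos o0 nu d.+1 < pos o0 nu d) : nat).

Lemma relE0 a (o0 : 'I_a) nu : relE o0 nu (E0 o0 nu).
Proof.
move=> d hd; rewrite /E0 big_nat_recr //=.
have : \sum_(0 <= d' < d) ((pos o0 nu d'.+1 < pos o0 nu d') : nat) <= d.
  apply: (@leq_trans (\sum_(0 <= d' < d) 1)); first by apply: leq_sum => i _; exact: leq_b1.
  by rewrite sum_nat_const_nat muln1 subn0.
move: (pos o0 nu d.+1 < pos o0 nu d) => bb; case: bb => /=; lia.
Qed.

Lemma sum_shift (f : nat -> nat) n s : (forall i, f (i + n) = f i) ->
  \sum_(0 <= t < n) f (s + t) = \sum_(0 <= t < n) f t.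
Proof.
move=> hp; elim: s => [|s IH]; first by under eq_bigr do rewrite add0n.
rewrite -IH.
have h1 := @big_nat_recl _ 0 addn n 0 (fun t => f (s + t)) (leq0n _).
have h2 := @big_nat_recr _ 0 addn n 0 (fun t => f (s + t)) (leq0n _).
rewrite /= addn0 in h1; rewrite /= hp in h2.
under eq_bigr do rewrite addSnnS.
lia.
Qed.

Lemma mem_Gx a b W F (x : 'I_a * 'I_b) :
  (x \in G a b (kof b W F)) = (x.1 < Rc W (F x.1) (x.1.+1 + (b - x.2.+1))).
Proof.
have hx2 := ltn_ord x.2.
rewrite inE /kof -(@pp_le b W x.1 (b - x.2.+1) (F x.1)); last by lia.
have := pp_leb b W x.1 (F x.1); move: (pp b W x.1 (F x.1)) => p hp.
apply/idP/idP; lia.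
Qed.

Lemma mem_GAx a b W F (x : 'I_a * 'I_b) :
  (forall i, W (i + (a + b)) = W i) -> Rc W 0 (a + b) = a ->
  let M := x.1.+1 + (b - x.2.+1) in
  (antipode x \in G a b (kof b W F)) =
  ~~ (x.1 < Rc W (F (a - x.1.+1) + ((a + b) - M)) M).
Proof.
move=> hp ht M.
rewrite mem_Gx /antipode /=.
have hx1 := ltn_ord x.1; have hx2 := ltn_ord x.2.
have eM : (a - x.1.+1).+1 + (b - (b - x.2.+1).+1) = (a + b) - M by rewrite /M; lia.
rewrite eM.
set m := F (a - x.1.+1).
have h := RcD W m ((a + b) - M) M.
rewrite (_ : a + b - M + M = a + b) in h; last by rewrite /M; lia.
rewrite Rc_full // ht in h.
move: h; move: (Rc W m (a + b - M)) (Rc W (m + (a + b - M)) M) => r1 r2 h.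
apply/idP/idP; lia.
Qed.

Import GRing.Theory.

Lemma hsum a b W (F : nat -> nat) (x : 'I_a * 'I_b) :
  (forall i, W (i + (a + b)) = W i) -> Rc W 0 (a + b) = a ->
  (\sum_(0 <= t < a + b) hstat x (G a b (kof b W (fun c => (F c + t)%N))))%R = 0%R.
Proof.
move=> hp ht.
set M := x.1.+1 + (b - x.2.+1).
pose f m := ((x.1 < Rc W m M) : nat).
have fp : forall i, f (i + (a + b)) = f i by move=> i; rewrite /f Rc_per.
have e : forall t, hstat x (G a b (kof b W (fun c => F c + t))) =
    ((f (F x.1 + t)%N)%:Z - (f (F (a - x.1.+1) + (a + b - M) + t)%N)%:Z)%R.
  move=> t; rewrite /hstat mem_Gx (mem_GAx _ _ hp ht) -/M /f.
  rewrite (_ : F (a - x.1.+1) + t + (a + b - M) = F (a - x.1.+1) + (a + b - M) + t); last by lia.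
  by case: (_ < Rc W _ M); case: (_ < Rc W _ M).
under eq_bigr do rewrite e.
rewrite sumrB.
have s1 := sum_shift (F x.1) fp.
have s2 := sum_shift (F (a - x.1.+1) + (a + b - M)) fp.
apply/eqP; rewrite subr_eq0; apply/eqP.
rewrite -!(big_morph Posz PoszD (erefl (Posz 0))).
by rewrite s1 s2.
Qed.

Lemma iter_period (X : Type) (T : X -> X) x m q : iter m T x = x -> iter (q * m) T x = x.
Proof.
move=> hm; elim: q => [//|q IH]; by rewrite mulSn iterD IH hm.
Qed.

Lemma orbit_sum (X : finType) (T : X -> X) (f : X -> int) x n :
  0 < n -> iter n T x = x -> (\sum_(0 <= t < n) f (iter t T x))%R = 0%R ->
  (\sum_(J | fconnect T x J) f J)%R = 0%R.
Proof.
move=> hn hx hs.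
have exP : exists k, (0 < k) && (iter k T x == x) by exists n; rewrite hn hx eqxx.
case: (ex_minnP exP) => m /andP [hm0 /eqP hmx] hmin.
have hmod : forall k, iter k T x = iter (k %% m) T x.
  by move=> k; rewrite {1}(divn_eq k m) addnC iterD iter_period.
have hinj : forall i j, i < m -> j < m -> iter i T x = iter j T x -> i = j.
  move=> i j; wlog hij : i j / i <= j.
    by move=> H hi hj e; case: (leqP i j) => h; [apply: H | apply/esym; apply: H] => //; apply: ltnW.
  move=> hi hj e; case: (ltngtP i j) hij => // hlt _.
  have : iter ((m - j) + i) T x = x.
    by rewrite iterD e -iterD subnK // ltnW.
  move=> /eqP h; have := hmin ((m - j) + i); rewrite h andbT.
  have -> : 0 < m - j + i by lia.
  move=> /(_ isT); lia.
pose g (k : 'I_m) := iter k T x.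
have ginj : {in [set: 'I_m] &, injective g}.
  by move=> i j _ _ /hinj => /(_ (ltn_ord i) (ltn_ord j)) /val_inj.
have eS : (\sum_(J | fconnect T x J) f J = \sum_(J in [set g k | k in [set: 'I_m]]) f J)%R.
  apply: eq_bigl => J; apply/idP/idP.
  - rewrite fconnect_orbit => /trajectP [i _ ->].
    apply/imsetP; exists (Ordinal (ltn_pmod i hm0)); first by rewrite inE.
    by rewrite /g /= -hmod.
  - by move=> /imsetP [k _ ->]; exact: fconnect_iter.
rewrite eS big_imset //=.
have hnm : n %% m = 0.
  case: (posnP (n %% m)) => // hpos.
  have := hmin (n %% m); rewrite hpos -hmod hx eqxx /= => /(_ isT).
  by rewrite leqNgt ltn_pmod.
have hq : n = (n %/ m) * m by rewrite {1}(divn_eq n m) hnm addn0.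
have hsum : forall q, (\sum_(0 <= t < q * m) f (iter t T x) =
                        (\sum_(0 <= t < m) f (iter t T x)) *+ q)%R.
  elim => [|q IH]; first by rewrite mul0n big_geq.
  rewrite mulrSr -IH mulSn addnC (@big_cat_nat _ _ _ (q * m)) //=; last by lia.
  congr (_ + _)%R.
  rewrite -{1}(add0n (q * m)) big_addn.
  rewrite (_ : q * m + m - q * m = m); last by lia.
  by apply: eq_bigr => t _; rewrite iterD iter_period.
move: hs; rewrite hq hsum => /eqP; rewrite Num.Theory.mulrn_eq0 => /orP [|/eqP hz].
  by move=> /eqP e; rewrite e mul0n in hq; move: hn; rewrite hq.
apply: etrans hz; rewrite big_mkord; apply: eq_big => // i; by rewrite inE.
Qed.

Definition Wof n (w : {ffun 'I_n -> bool}) (i : nat) : bool :=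
  [exists j : 'I_n, (val j == i %% n) && w j].

Lemma Wof_ord n (w : {ffun 'I_n -> bool}) (j : 'I_n) : Wof w j = w j.
Proof.
apply/existsP/idP => [[j' /andP [/eqP e hw]]|hw].
  by move: e; rewrite modn_small // => /val_inj <-.
by exists j; rewrite modn_small // eqxx.
Qed.

Lemma Wof_per n (w : {ffun 'I_n -> bool}) i : Wof w (i + n) = Wof w i.
Proof. by rewrite /Wof modnDr. Qed.

Lemma Wof_perk n (w : {ffun 'I_n -> bool}) i q : Wof w (i + q * n) = Wof w i.
Proof. by rewrite /Wof addnC modnMDl. Qed.

Lemma Wof_tot n (w : {ffun 'I_n -> bool}) : Rc (Wof w) 0 n = \sum_(j < n) (w j : nat).
Proof.
rewrite /Rc add0n big_mkord; apply: eq_bigr => j _; by rewrite Wof_ord.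
Qed.

Definition valid a b (w : {ffun 'I_(a + b) -> bool}) := \sum_(j < a + b) (w j : nat) == a.

Lemma Phi_inj a b (ha : 0 < a) (hb : 0 < b) (o0 : 'I_a) (nu : {perm 'I_a})
  (w w' : {ffun 'I_(a + b) -> bool}) :
  valid w -> valid w' ->
  G a b (kof b (Wof w) (E0 o0 nu)) = G a b (kof b (Wof w') (E0 o0 nu)) -> w = w'.
Proof.
move=> /eqP hv /eqP hv' e.
have hp := @Wof_per _ w; have hp' := @Wof_per _ w'.
have ht : Rc (Wof w) 0 (a + b) = a by rewrite Wof_tot.
have ht' : Rc (Wof w') 0 (a + b) = a by rewrite Wof_tot.
have et : forall t, G a b (kof b (Wof w) (fun c => E0 o0 nu c + t)) =
                    G a b (kof b (Wof w') (fun c => E0 o0 nu c + t)).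
  move=> t; rewrite -(iter_comotion _ hp ht hb (relE0 o0 nu)).
  by rewrite -(iter_comotion _ hp' ht' hb (relE0 o0 nu)) e.
have hb1 : b.-1 < b by lia.
pose y : 'I_a * 'I_b := (Ordinal ha, Ordinal hb1).
have memy : forall (W : nat -> bool) F, (y \in G a b (kof b W F)) = W (F 0).
  move=> W F; rewrite inE /kof /= -(@pp0 b W (F 0) hb).
  have := pp_leb b W 0 (F 0); move: (pp b W 0 (F 0)) => p hpb.
  apply/idP/idP; lia.
have eW : forall t, Wof w (E0 o0 nu 0 + t) = Wof w' (E0 o0 nu 0 + t).
  by move=> t; rewrite -(memy (Wof w) (fun c => E0 o0 nu c + t)) -(memy (Wof w') (fun c => E0 o0 nu c + t)) et.
apply/ffunP => j.
have := eW (j + E0 o0 nu 0 * (a + b).-1).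
rewrite (_ : E0 o0 nu 0 + (j + E0 o0 nu 0 * (a + b).-1) = j + E0 o0 nu 0 * (a + b)); last first.
  have : E0 o0 nu 0 * (a + b) = E0 o0 nu 0 * (a + b).-1 + E0 o0 nu 0 by rewrite -mulnSr prednK //; lia.
  lia.
by rewrite !Wof_perk !Wof_ord.
Qed.

Definition memn a b (I : {set 'I_a * 'I_b}) (c j : nat) : bool :=
  [exists y : 'I_a * 'I_b, [&& (y.1 : nat) == c, (y.2 : nat) == j & y \in I]].
Definition htn a b (I : {set 'I_a * 'I_b}) c := \sum_(0 <= j < b) (memn I c j : nat).
Definition qn a b (I : {set 'I_a * 'I_b}) c := b - htn I c + c.

Lemma memnE a b (I : {set 'I_a * 'I_b}) (y : 'I_a * 'I_b) : memn I y.1 y.2 = (y \in I).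
Proof.
apply/existsP/idP => [[z /and3P [/eqP e1 /eqP e2 hz]]|hy]; last by exists y; rewrite !eqxx.
by have -> : y = z by case: y z e1 e2 hz => [y1 y2] [z1 z2] /= /val_inj -> /val_inj ->.
Qed.

Lemma memn_down a b (I : {set 'I_a * 'I_b}) c c' j j' : is_ideal I ->
  c' <= c -> j' <= j -> memn I c j -> memn I c' j'.
Proof.
move=> hI hc hj /existsP [y /and3P [/eqP e1 /eqP e2 hy]].
have h1 : c' < a by rewrite (leq_ltn_trans hc) // -e1.
have h2 : j' < b by rewrite (leq_ltn_trans hj) // -e2.
have hz : (Ordinal h1, Ordinal h2) \in I.
  move: hI => /forallP /(_ y) /forallP /(_ (Ordinal h1, Ordinal h2)) /implyP; apply.
  rewrite hy /Qle /=; apply/andP; split; lia.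
by apply/existsP; exists (Ordinal h1, Ordinal h2); rewrite /= !eqxx hz.
Qed.

Lemma mem_ht a b (I : {set 'I_a * 'I_b}) (y : 'I_a * 'I_b) : is_ideal I ->
  (y \in I) = (y.2 < htn I y.1).
Proof.
move=> hI; rewrite -memnE /htn ltnNge (@sum_prefix (memn I y.1)) ?negbK //.
move=> i; exact: (memn_down hI (leqnn _) (leqnSn i)).
Qed.

Lemma htn_leb a b (I : {set 'I_a * 'I_b}) c : htn I c <= b.
Proof.
apply: (@leq_trans (\sum_(0 <= j < b) 1)); first by apply: leq_sum => i _; exact: leq_b1.
by rewrite sum_nat_const_nat muln1 subn0.
Qed.

Lemma htn_mono a b (I : {set 'I_a * 'I_b}) c : is_ideal I -> htn I c.+1 <= htn I c.
Proof.
move=> hI; apply: leq_sum => j _.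
case h: (memn I c.+1 j) => //=; by rewrite (memn_down hI (leqnSn c) (leqnn j) h).
Qed.

Lemma qn_mono a b (I : {set 'I_a * 'I_b}) c : is_ideal I -> qn I c < qn I c.+1.
Proof.
move=> hI; rewrite /qn; have := htn_mono c hI; have := htn_leb I c; have := htn_leb I c.+1; lia.
Qed.

Lemma qn_lt a b (I : {set 'I_a * 'I_b}) c c' : is_ideal I -> c < c' -> qn I c < qn I c'.
Proof.
move=> hI; elim: c' => [//|c' IH]; rewrite ltnS leq_eqVlt => /orP [/eqP ->|h].
  exact: qn_mono.
exact: ltn_trans (IH h) (qn_mono c' hI).
Qed.

Definition Psi a b (I : {set 'I_a * 'I_b}) : {ffun 'I_(a + b) -> bool} :=
  [ffun i : 'I_(a + b) => [exists c : 'I_a, (i : nat) == qn I c]].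

Lemma Wof_Psi a b (I : {set 'I_a * 'I_b}) i : i < a + b ->
  Wof (Psi I) i = [exists c : 'I_a, i == qn I c].
Proof. by move=> hi; rewrite -[i]/(val (Ordinal hi)) Wof_ord ffunE. Qed.

Lemma sum_eq_exists a b (I : {set 'I_a * 'I_b}) m : is_ideal I ->
  \sum_(c : 'I_a) ((qn I c == m) : nat) = [exists c : 'I_a, m == qn I c].
Proof.
move=> hI; case: existsP => [[c0 /eqP e]|hne].
- rewrite (bigD1 c0) //= -e eqxx big1 // => c hc.
  case: eqP => // eq; case/eqP: hc; apply: val_inj.
  case: (ltngtP c c0) => // h.
  + by have := qn_lt hI h; rewrite eq; lia.
  + by have := qn_lt hI h; rewrite eq; lia.
- rewrite big1 // => c _; case: eqP => // e; case: hne; by exists c; rewrite e.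
Qed.

Lemma Rc_Psi a b (I : {set 'I_a * 'I_b}) m : is_ideal I -> m <= a + b ->
  Rc (Wof (Psi I)) 0 m = \sum_(c : 'I_a) ((qn I c < m) : nat).
Proof.
move=> hI; elim: m => [|m IH] hm.
  by rewrite Rc0 big1 // => c _; rewrite ltn0.
rewrite RcSr IH; last by lia.
rewrite add0n Wof_Psi // -(sum_eq_exists m hI) -big_split /=.
apply: eq_bigr => c _; rewrite ltnS leq_eqVlt; case: ltngtP => //=; lia.
Qed.

Lemma count_le a b (I : {set 'I_a * 'I_b}) c M : is_ideal I -> c < a ->
  (\sum_(c' : 'I_a) ((qn I c' < M) : nat) <= c) = (M <= qn I c).
Proof.
move=> hI hc.
rewrite -(big_mkord xpredT (fun c' => ((qn I c' < M) : nat))).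
rewrite (@sum_prefix (fun c' => qn I c' < M)) //; first by rewrite ltnNge negbK.
move=> i h; exact: ltn_trans (qn_mono i hI) h.
Qed.

Lemma sum_lt t b : t <= b -> \sum_(0 <= i < b) ((i < t) : nat) = t.
Proof.
move=> htb; rewrite (@big_cat_nat _ _ _ t) //=.
rewrite (@eq_big_nat _ _ _ 0 t _ (fun _ => 1)); last by move=> i /andP [_ ->].
rewrite (@eq_big_nat _ _ _ t b _ (fun _ => 0)); last first.
  by move=> i /andP [h _]; rewrite ltnNge h.
by rewrite !sum_nat_const_nat muln1 muln0 addn0 subn0.
Qed.

Lemma pp_Psi a b (I : {set 'I_a * 'I_b}) c : is_ideal I -> c < a ->
  pp b (Wof (Psi I)) c 0 = b - htn I c.
Proof.
move=> hI hc; rewrite /pp.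
rewrite (@eq_big_nat _ _ _ 0 b _ (fun i => ((i < b - htn I c) : nat))).
  by rewrite sum_lt // leq_subr.
move=> i /andP [_ hi]; rewrite Rc_Psi //; last by lia.
rewrite count_le // /qn.
have := htn_leb I c; move: (htn I c) => h hh.
case: (c.+1 + i <= b - h + c) / idP => h1; case: (i < b - h) / idP => h2 //=; lia.
Qed.

Lemma G_Psi a b (I : {set 'I_a * 'I_b}) : is_ideal I ->
  G a b (kof b (Wof (Psi I)) (fun _ => 0)) = I.
Proof.
move=> hI; apply/setP => y; rewrite inE /kof pp_Psi // (mem_ht y hI).
have := htn_leb I y.1; move: (htn I y.1) => h hh.
by rewrite subKn.
Qed.

Lemma Psi_valid a b (I : {set 'I_a * 'I_b}) : is_ideal I -> valid (Psi I).
Proof.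
move=> hI; rewrite /valid -Wof_tot Rc_Psi //.
rewrite (eq_bigr (fun _ => 1)) ?sum1_card ?card_ord //.
move=> c _; rewrite /qn; have := htn_leb I c; have := ltn_ord c.
move: (htn I c) (c : nat) => h cc h1 h2.
case: (b - h + cc < a + b) / idP => //; lia.
Qed.

Unset Implicit Arguments.

Theorem mainTheorem11 (a b : nat) (ha : (0 < a)%N) (hb : (0 < b)%N)
  (nu : {perm 'I_a}) (x : 'I_a * 'I_b) :
  zero_mesic_on_ideals (@comotion a b nu) (hstat x).
Proof.
move=> I hI.
pose o0 := x.1.
pose E := E0 o0 nu.
pose V := [set w : {ffun 'I_(a + b) -> bool} | valid w].
pose ID := [set J : {set 'I_a * 'I_b} | is_ideal J].
pose Phi (w : {ffun 'I_(a + b) -> bool}) := G a b (kof b (Wof w) E).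
have c1 : #|ID| <= #|V|.
  rewrite -(@card_in_imset _ _ (@Psi a b) ID).
    apply: subset_leq_card; apply/subsetP => w /imsetP [J hJ ->].
    by move: hJ; rewrite !inE; exact: Psi_valid.
  move=> J J' hJ hJ' e; rewrite inE in hJ; rewrite inE in hJ'.
  by rewrite -(G_Psi hJ) -(G_Psi hJ') e.
have c2 : #|Phi @: V| = #|V|.
  apply: card_in_imset => w w' hw hw'; rewrite !inE in hw hw'.
  move=> e; exact: (Phi_inj ha hb hw hw' e).
have hvw : forall w : {ffun 'I_(a + b) -> bool}, valid w -> Rc (Wof w) 0 (a + b) = a.
  by move=> w hv; rewrite Wof_tot; apply/eqP.
have sub : Phi @: V \subset ID.
  apply/subsetP => J /imsetP [w hw ->]; rewrite inE in hw; rewrite inE.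
  apply: G_ideal; apply: (mono_kof (@Wof_per _ w) (hvw w hw) hb) => c hc.
  rewrite /E (relE0 o0 nu hc).
  by case: (pos o0 nu c.+1 < pos o0 nu c); [right; rewrite addn1 | left; rewrite addn0].
have eqS : Phi @: V = ID.
  by apply/eqP; rewrite eqEcard sub c2 c1.
have : I \in Phi @: V by rewrite eqS inE.
move=> /imsetP [w hw ->]; rewrite inE in hw.
have hp := @Wof_per _ w; have ht := hvw w hw.
apply: (@orbit_sum _ _ _ _ (a + b)).
- by rewrite addn_gt0 ha.
- rewrite /Phi (iter_comotion _ hp ht hb (relE0 o0 nu)).
  by apply: G_eq => c _; rewrite /kof pp_per.
- apply: etrans _ (@hsum a b (Wof w) E x hp ht).
  by apply: eq_bigr => t _; rewrite /Phi (iter_comotion _ hp ht hb (relE0 o0 nu)).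
Qed.
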